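(* Let $f\colon\{0,1\}^n\to\{0,1\}^n$ and $F(x,i)=f(x)_{1,\ldots,i-1}$ on $\{0,1\}^n\times[n]$, and let $Z=(X,I)$ be uniform on $\{0,1\}^n\times[n]$. Let $A$ be an $F$-collision-finder, and for $(x,i)$ let $\varepsilon(x,i)$ be the statistical distance between the output distribution of $A(x,i;R)$ ($R$ uniform coins) and the uniform distribution on $F^{-1}(F(x,i))$. If $H(A(Z;R)\mid Z)\ge H(Z\mid F(Z))-\frac{1}{64n^2}$, then $\mathbb{E}_{i\leftarrow[n],x\leftarrow\{0,1\}^n}[\varepsilon(x,i)]\le\frac{1}{8n}$.
   Context: An $F$-collision-finder is a randomized algorithm $A$ with $A(z;r)\in F^{-1}(F(z))$ for every input $z$ in the domain of $F$ and coins $r$. Statistical distance between $P,Q$ is $\max_T|P(T)-Q(T)|$. $H(\cdot\mid\cdot)$ is conditional Shannon entropy. *)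

(* Defs.v *)
From Stdlib Require Import Reals.
From mathcomp Require Import all_boot all_order all_algebra.
From mathcomp Require Import Rstruct.
Set Implicit Arguments. Unset Strict Implicit. Unset Printing Implicit Defensive.
Import Order.TTheory GRing.Theory Num.Theory.
Local Open Scope ring_scope.

Definition log2 (x : R) : R := (ln x / ln 2)%R.

(* Conditional Shannon entropy H(Y | X) of two random variables X, Y
   defined on a finite sample space Omega with the uniform distribution:
   H(Y|X) = - sum_{w} Pr[w] * log2 Pr[Y = Y w | X = X w]
          = - sum_{x,y} p(x,y) log2 (p(x,y)/p(x)). *)
Definition condEnt (Omega : finType) (TX TY : eqType)
    (X : Omega -> TX) (Y : Omega -> TY) : R :=
  \sum_(w : Omega)
     (#|Omega|%:R)^-1 *
     - log2 (#|[pred v | (X v == X w) && (Y v == Y w)]|%:R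
             / #|[pred v | X v == X w]|%:R).

Definition stat_dist (D : finType) (P Q : {set D} -> R) : R :=
  \big[Num.max/0]_(T : {set D}) `|P T - Q T|.

(* bit strings {0,1}^n and the domain {0,1}^n x [n];
   i : 'I_n with value k encodes the index k+1 in [n] = {1,...,n} *)
Definition bits (n : nat) := (n.-tuple bool)%type.
Definition dom (n : nat) := (bits n * 'I_n)%type.

Definition Fpre (n : nat) (f : bits n -> bits n) (z : dom n) : seq bool :=
  take (nat_of_ord z.2) (val (f z.1)).

Definition collision_finder (D : finType) (C : eqType) (F : D -> C)
    (Rc : finType) (A : D -> Rc -> D) : Prop :=
  forall z r, F (A z r) = F z.

Definition out_dist (D Rc : finType) (A : D -> Rc -> D) (z : D)
    (T : {set D}) : R :=
  #|[set r : Rc | A z r \in T]|%:R / #|Rc|%:R.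

Definition unif_preimage (D : finType) (C : eqType) (F : D -> C) (z : D)
    (T : {set D}) : R :=
  #|T :&: [set z' | F z' == F z]|%:R / #|[set z' | F z' == F z]|%:R.

(* Main.v *)
Require Import Defs.
From Stdlib Require Import Reals.
From mathcomp Require Import all_boot all_order all_algebra.
From mathcomp Require Import Rstruct ring lra.
Import Order.TTheory GRing.Theory Num.Theory.
Local Open Scope ring_scope.

Lemma ln_le_sub1 (x : R) : 0 < x -> ln x <= x - 1.
Proof.
move=> x0.
have := exp_ineq1_le (ln x). rewrite exp_ln; last by apply/RltP.
move/RleP. rewrite !RealsE. lra.
Qed.

Lemma ln_lb (x : R) : 0 < x -> 2 - 2 / Num.sqrt x <= ln x.
Proof.
move=> x0.
have t0 : 0 < Num.sqrt x by rewrite sqrtr_gt0.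
have hx : x = Num.sqrt x * Num.sqrt x by rewrite -expr2 sqr_sqrtr // ltW.
have hl : ln x = ln (Num.sqrt x) + ln (Num.sqrt x).
  by rewrite {1}hx -RmultE ln_mult -?RplusE //; apply/RltP.
have hi := @ln_le_sub1 (Num.sqrt x)^-1. rewrite invr_gt0 t0 in hi. have {}hi := hi isT.
rewrite -RinvE ln_Rinv -?RoppE in hi; last by apply/RltP.
rewrite hl. rewrite !RealsE in hi. lra.
Qed.

Lemma CS (I : finType) (a b : I -> R) :
  (\sum_i a i * b i) ^+ 2 <= (\sum_i a i ^+ 2) * (\sum_i b i ^+ 2).
Proof.
set A := \sum_i a i ^+ 2; set B := \sum_i b i ^+ 2; set S := \sum_i a i * b i.
have A0 : 0 <= A by apply: sumr_ge0 => i _; apply: sqr_ge0.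
have B0 : 0 <= B by apply: sumr_ge0 => i _; apply: sqr_ge0.
have H t : 0 <= t ^+ 2 * A - 2 * t * S + B.
  have -> : t ^+ 2 * A - 2 * t * S + B = \sum_i (t * a i - b i) ^+ 2.
    rewrite /A /B /S mulr_sumr mulr_sumr -sumrN -!big_split /=.
    by apply: eq_bigr => i _; ring.
  by apply: sumr_ge0 => i _; apply: sqr_ge0.
have [A0'|Ap] := eqVneq A 0.
  have ha : forall i, a i = 0.
    move=> i; apply/eqP; rewrite -sqrf_eq0; apply/eqP.
    apply/eqP; rewrite eq_le sqr_ge0 andbT.
    have : a i ^+ 2 <= A.
      rewrite /A (bigD1 i) //= lerDl; apply: sumr_ge0 => j _; exact: sqr_ge0.
    by rewrite A0'.
  have -> : S = 0 by rewrite /S big1 // => i _; rewrite ha mul0r.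
  by rewrite A0' expr0n /= mul0r.
have Apos : 0 < A by rewrite lt_def Ap A0.
have := H (S / A).
have -> : (S / A) ^+ 2 * A - 2 * (S / A) * S + B = B - S ^+ 2 / A.
  by field.
rewrite subr_ge0 ler_pdivrMr // => h. by rewrite mulrC.
Qed.

Lemma key (Y : finType) (p u : Y -> R) (hp : forall y, 0 <= p y)
  (hu : forall y, 0 <= u y) (sp : \sum_y p y = 1) (su : \sum_y u y = 1)
  (T : {set Y}) :
  (\sum_(y in T) p y - \sum_(y in T) u y) ^+ 2
  <= 2 - 2 * \sum_y Num.sqrt (p y) * Num.sqrt (u y).
Proof.
set d := fun y => p y - u y.
set X := \sum_(y in T) p y - \sum_(y in T) u y.
have hX : X = \sum_(y in T) d y by rewrite /X -sumrB.
have hd0 : \sum_y d y = 0 by rewrite /d sumrB sp su subrr.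
have hsplit : \sum_y d y = \sum_(y in T) d y + \sum_(y | y \notin T) d y.
  by rewrite (bigID (fun y => y \in T)).
have hX2 : X = - \sum_(y | y \notin T) d y.
  by apply/eqP; rewrite hX -addr_eq0 -hsplit hd0.
have h2X : 2 * `|X| <= \sum_y `|d y|.
  rewrite (bigID (fun y => y \in T)) /= mulr2n mulrDl !mul1r.
  apply: lerD.
    by rewrite hX; apply: ler_norm_sum.
  by rewrite hX2 normrN; apply: ler_norm_sum.
set H := \sum_y (Num.sqrt (p y) - Num.sqrt (u y)) ^+ 2.
set G := \sum_y (Num.sqrt (p y) + Num.sqrt (u y)) ^+ 2.
set BC := \sum_y Num.sqrt (p y) * Num.sqrt (u y).
have sq y : Num.sqrt (p y) ^+ 2 = p y by rewrite sqr_sqrtr.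
have sq' y : Num.sqrt (u y) ^+ 2 = u y by rewrite sqr_sqrtr.
have hH : H = 2 - 2 * BC.
  rewrite /H /BC.
  have -> : 2 - 2 * \sum_y Num.sqrt (p y) * Num.sqrt (u y) =
     \sum_y (p y + u y - 2 * (Num.sqrt (p y) * Num.sqrt (u y))).
    by rewrite sumrB big_split /= sp su mulr_sumr.
  by apply: eq_bigr => y _; move: (sq y) (sq' y); set a := Num.sqrt (p y); set b := Num.sqrt (u y); move=> <- <-; ring.
have hG : G = 2 + 2 * BC.
  rewrite /G /BC.
  have -> : 2 + 2 * \sum_y Num.sqrt (p y) * Num.sqrt (u y) =
     \sum_y (p y + u y + 2 * (Num.sqrt (p y) * Num.sqrt (u y))).
    by rewrite !big_split /= sp su mulr_sumr.
  by apply: eq_bigr => y _; move: (sq y) (sq' y); set a := Num.sqrt (p y); set b := Num.sqrt (u y); move=> <- <-; ring.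
have H0 : 0 <= H by apply: sumr_ge0 => y _; apply: sqr_ge0.
have hcs : (\sum_y `|d y|) ^+ 2 <= H * G.
  have -> : \sum_y `|d y| = \sum_y `|Num.sqrt (p y) - Num.sqrt (u y)| *
                           `|Num.sqrt (p y) + Num.sqrt (u y)|.
    apply: eq_bigr => y _; rewrite -normrM /d; congr `|_|.
    move: (sq y) (sq' y); set a := Num.sqrt (p y); set b := Num.sqrt (u y); move=> <- <-; ring.
  have := @CS Y (fun y => `|Num.sqrt (p y) - Num.sqrt (u y)|)
                      (fun y => `|Num.sqrt (p y) + Num.sqrt (u y)|).
  have e1 : \sum_y `|Num.sqrt (p y) - Num.sqrt (u y)| ^+ 2 = H.
    by apply: eq_bigr => y _; rewrite real_normK // num_real.
  have e2 : \sum_y `|Num.sqrt (p y) + Num.sqrt (u y)| ^+ 2 = G.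
    by apply: eq_bigr => y _; rewrite real_normK // num_real.
  by rewrite /= e1 e2.
have dX : 0 <= \sum_y `|d y| by apply: sumr_ge0 => y _.
have nX : 0 <= `|X| by [].
have : (2 * `|X|) ^+ 2 <= (\sum_y `|d y|) ^+ 2.
  by apply: lerXn2r; rewrite // ?nnegrE ?mulr_ge0.
move=> h.
have eX : X ^+ 2 = `|X| ^+ 2 by rewrite real_normK ?num_real.
rewrite eX -hH.
have HG : G <= 4 by rewrite hG; lra.
have hm : H * G <= H * 4 := ler_wpM2l H0 HG.
rewrite exprMn in h.
lra.
Qed.

Lemma sd_bound (Y : finType) (P Q : {set Y} -> R) (K : R) (hK : 0 <= K)
  (h : forall T, (P T - Q T) ^+ 2 <= K) :
  0 <= stat_dist P Q /\ (stat_dist P Q) ^+ 2 <= K.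
Proof.
rewrite /stat_dist.
apply: (big_ind (fun x => 0 <= x /\ x ^+ 2 <= K)).
- by rewrite expr0n.
- move=> x y [x0 xK] [y0 yK].
  by case: (leP x y) => _; split.
- move=> T _; split => //.
  by rewrite real_normK ?num_real.
Qed.

Lemma part (D Rc : finType) (g : Rc -> D) (G : D -> R) :
  \sum_r G (g r) = \sum_y (#|[set r | g r == y]|)%:R * G y.
Proof.
rewrite (partition_big g xpredT) //=.
apply: eq_bigr => y _.
rewrite (eq_bigr (fun _ => G y)); last by move=> r /eqP ->.
rewrite sumr_const mulr_natl; congr (_ *+ _).
by apply: eq_card => r; rewrite !inE.
Qed.

Lemma card_sum (Rc : finType) (P : pred Rc) :
  (#|[set r | P r]|)%:R = \sum_r ((P r)%:R : R).
Proof.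
rewrite cardsE -sum1_card natr_sum big_mkcond /=.
by apply: eq_bigr => r _; rewrite /in_mem /=; case: (P r).
Qed.

Lemma card_sum' (Y : finType) (B : {set Y}) :
  (#|B|)%:R = \sum_y ((y \in B)%:R : R).
Proof.
rewrite -sum1_card natr_sum big_mkcond /=.
by apply: eq_bigr => r _; case: (r \in B).
Qed.

Theorem lemma4p3 (n : nat) (n_gt0 : (0 < n)%N) (f : bits n -> bits n)
    (Rc : finType) (Rc_nonempty : (0 < #|Rc|)%N)
    (A : dom n -> Rc -> dom n)
    (hA : collision_finder (Fpre f) A)
    (hH : condEnt (fun w : dom n * Rc => w.1) (fun w : dom n * Rc => A w.1 w.2)
          >= condEnt (Fpre f) (fun z : dom n => z)
             - (64 * (n%:R) ^+ 2)^-1) :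
  (#|{: dom n}|%:R)^-1 *
    \sum_(z : dom n) stat_dist (out_dist A z) (unif_preimage (Fpre f) z)
  <= (8 * n%:R)^-1.
Proof.
set N := #|{: dom n}|.
set m := #|Rc|.
set F := Fpre f.
pose S z := [set v | F v == F z].
pose c z y := #|[set r | A z r == y]|.
pose p z y : R := (c z y)%:R / m%:R.
pose u z y : R := (y \in S z)%:R / (#|S z|)%:R.
pose K z : R := m%:R^-1 * \sum_r ln ((#|S z|)%:R * (c z (A z r))%:R / m%:R).
pose BC z := \sum_y Num.sqrt (p z y) * Num.sqrt (u z y).
set a := fun z => stat_dist (out_dist A z) (unif_preimage F z).
have m0 : 0 < m%:R :> R by rewrite ltr0n.
have S0 z : (0 < #|S z|)%N by apply/card_gt0P; exists z; rewrite inE.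
have S0' z : 0 < (#|S z|)%:R :> R by rewrite ltr0n.
have c0 z r : (0 < c z (A z r))%N by apply/card_gt0P; exists r; rewrite inE.
have c0' z r : 0 < (c z (A z r))%:R :> R by rewrite ltr0n.
have N0 : (0 < N)%N.
  apply/card_gt0P.
  have i0 : 'I_n by exact: (Ordinal n_gt0).
  by exists ([tuple of nseq n false], i0).
have N0' : 0 < N%:R :> R by rewrite ltr0n.
have hp0 z y : 0 <= p z y by rewrite /p divr_ge0.
have hu0 z y : 0 <= u z y by rewrite /u divr_ge0.
have sp z : \sum_y p z y = 1.
  have e : \sum_y (c z y)%:R = m%:R :> R.
    rewrite (eq_bigr (fun y => (c z y)%:R * 1)); last by move=> y _; rewrite mulr1.
    by rewrite -(part _ _ (A z) (fun _ => 1)) sumr_const cardT -cardE.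
  by rewrite /p -mulr_suml e divff // lt0r_neq0.
have su z : \sum_y u z y = 1.
  by rewrite /u -mulr_suml -card_sum' divff // lt0r_neq0.
have hout z T : out_dist A z T = \sum_(y in T) p z y.
  rewrite /out_dist card_sum (part _ _ (A z) (fun y => ((y \in T)%:R : R))).
  rewrite RdivE mulr_suml [RHS]big_mkcond /=; apply: eq_bigr => y _.
  by rewrite /p; case: (y \in T); rewrite ?mulr1 ?mulr0 ?mul0r.
have hunif z T : unif_preimage F z T = \sum_(y in T) u z y.
  rewrite /unif_preimage RdivE -/(S z) card_sum' mulr_suml [RHS]big_mkcond /=.
  apply: eq_bigr => y _; rewrite /u inE.
  by case: (y \in T); rewrite /= ?mul0r.
have stepB z : 2 - 2 * BC z <= K z.
  pose G (y : dom n) : R := (Num.sqrt ((#|S z|)%:R * (c z y)%:R / m%:R))^-1.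
  have x0 r : 0 < (#|S z|)%:R * (c z (A z r))%:R / m%:R :> R.
    by rewrite mulr_gt0 ?invr_gt0 // mulr_gt0.
  have h1 : m%:R^-1 * \sum_r (2 - 2 * G (A z r)) <= K z.
    apply: ler_wpM2l; first by rewrite invr_ge0 ltW.
    by apply: ler_sum => r _; apply: ln_lb.
  have h2 : m%:R^-1 * \sum_r (2 - 2 * G (A z r)) =
            2 - 2 * (m%:R^-1 * \sum_r G (A z r)).
    rewrite sumrB sumr_const -mulr_sumr cardT -cardE -/m.
    field. by rewrite lt0r_neq0.
  have h3 : m%:R^-1 * \sum_r G (A z r) = BC z.
    rewrite (part _ _ (A z) G) mulr_sumr /BC; apply: eq_bigr => y _.
    rewrite -/(c z y).
    have [cy0|cyp] := posnP (c z y).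
      by rewrite /p cy0 !mul0r sqrtr0 !mul0r mulr0.
    have yS : y \in S z.
      case/card_gt0P: cyp => r; rewrite inE => /eqP <-.
      by rewrite inE; apply/eqP; exact: hA.
    rewrite /p /u yS /= div1r.
    have q0 : 0 < (c z y)%:R / m%:R :> R by rewrite divr_gt0 // ltr0n.
    have sq0 : 0 < Num.sqrt ((c z y)%:R / m%:R) :> R by rewrite sqrtr_gt0.
    have ss0 : 0 < Num.sqrt (#|S z|)%:R :> R by rewrite sqrtr_gt0.
    rewrite /G -mulrA sqrtrM; last by rewrite ltW.
    rewrite sqrtrV; last by rewrite ltW.
    have e : (c z y)%:R = Num.sqrt ((c z y)%:R / m%:R) ^+ 2 * m%:R :> R.
      rewrite sqr_sqrtr; last by rewrite ltW.
      by rewrite -mulrA mulVf ?mulr1 // lt0r_neq0.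
    rewrite {1}e.
    field. by rewrite !lt0r_neq0.
  by rewrite -h3 -h2.
have stepC z : 0 <= a z /\ a z ^+ 2 <= K z.
  apply: sd_bound.
    apply: le_trans (stepB z).
    have := key _ _ _ (hp0 z) (hu0 z) (sp z) (su z) set0.
    by rewrite !big_set0 subrr expr0n.
  move=> T; rewrite hout hunif; apply: le_trans (stepB z).
  exact: key.
have stepA : \sum_z K z <= N%:R * (64 * (n%:R) ^+ 2)^-1.
  have cA z y : #|[pred v : dom n * Rc | (v.1 == z) && (A v.1 v.2 == y)]| = c z y.
    rewrite -!sum1_card.
    rewrite -(pair_big_dep (fun i => i == z) (fun i j => A i j == y) (fun _ _ => 1%N)).
    rewrite big_pred1_eq /c -sum1_card; apply: eq_bigl => r; rewrite inE //.
  have cB z : #|[pred v : dom n * Rc | v.1 == z]| = m.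
    rewrite -sum1_card (eq_bigl (fun v : dom n * Rc => (v.1 == z) && true)); last first.
      by move=> v; rewrite andbT.
    rewrite -(pair_big_dep (fun i => i == z) (fun i j => true) (fun _ _ => 1%N)).
    by rewrite big_pred1_eq sum1_card cardT -cardE.
  have e2 : IZR 2 = 2%:R :> R by rewrite !RealsE.
  have L21 : ln (IZR 2) <= 1.
    rewrite e2; have := @ln_le_sub1 2%:R; rewrite ltr0n => /(_ isT) h; lra.
  have L20 : 0 < ln (IZR 2).
    apply/RltP; apply: Rlt_trans ln_lt_2; apply: Rinv_0_lt_compat; exact: Rlt_0_2.
  have E1 : condEnt (fun w : dom n * Rc => w.1) (fun w : dom n * Rc => A w.1 w.2)
     = \sum_z \sum_r (N%:R * m%:R)^-1 * - (ln ((c z (A z r))%:R / m%:R) / ln (IZR 2)).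
    rewrite /condEnt pair_big /=; apply: eq_bigr => [[z r]] _ /=.
    by rewrite cA cB card_prod natrM /log2.
  have E2 : condEnt F (fun z : dom n => z)
     = \sum_z N%:R^-1 * - (ln (1 / (#|S z|)%:R) / ln (IZR 2)).
    rewrite /condEnt; apply: eq_bigr => z _ /=.
    have e1 : #|[pred v | (F v == F z) && (v == z)]| = 1%N.
      rewrite -(card1 z); apply: eq_card => v; rewrite !inE.
      by case: (v =P z) => [->|_]; rewrite ?eqxx ?andbF.
    have e3 : #|[pred v | F v == F z]| = #|S z|.
      by rewrite cardsE.
    by rewrite e1 e3 /log2.
  have Dz z : N%:R^-1 * - (ln (1 / (#|S z|)%:R) / ln (IZR 2)) -
     \sum_r (N%:R * m%:R)^-1 * - (ln ((c z (A z r))%:R / m%:R) / ln (IZR 2))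
     = (ln (IZR 2))^-1 * N%:R^-1 * K z.
    have hs : ln (1 / (#|S z|)%:R) = - ln (#|S z|)%:R.
      by rewrite !RealsE div1r -RinvE ln_Rinv ?RoppE //; apply/RltP.
    have hr r : ln ((#|S z|)%:R * (c z (A z r))%:R / m%:R) =
                ln (#|S z|)%:R + ln ((c z (A z r))%:R / m%:R).
      rewrite !RealsE -mulrA -RmultE ln_mult ?RplusE //; apply/RltP => //.
      by rewrite divr_gt0.
    rewrite /K (eq_bigr _ (fun r _ => hr r)) big_split /= sumr_const cardT -cardE -/m.
    rewrite hs.
    rewrite (eq_bigr (fun r => (- ((N%:R * m%:R)^-1 / ln (IZR 2))) * ln ((c z (A z r))%:R / m%:R))); last first.
      move=> r _; rewrite /=. field. by rewrite !lt0r_neq0.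
    rewrite -mulr_sumr.
    set Q := \sum_r _.
    rewrite -mulr_natl. field. by rewrite !lt0r_neq0.
  move: hH; rewrite E1 E2 => h.
  set del := (64 * (n%:R) ^+ 2)^-1 in h *.
  have h' : \sum_z N%:R^-1 * - (ln (1 / (#|S z|)%:R) / ln (IZR 2)) -
     \sum_z \sum_r (N%:R * m%:R)^-1 * - (ln ((c z (A z r))%:R / m%:R) / ln (IZR 2))
     <= del by lra.
  rewrite -sumrB (eq_bigr _ (fun z _ => Dz z)) -mulr_sumr in h'.
  set X := \sum_z K z in h' *.
  have d0 : 0 <= del by rewrite invr_ge0 mulr_ge0 // sqr_ge0.
  have : X <= ln (IZR 2) * N%:R * del.
    have LN0 : 0 < ln (IZR 2) * N%:R := mulr_gt0 L20 N0'.
    rewrite -ler_pdivrMl //.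
    have -> : (ln (IZR 2) * N%:R)^-1 * X = (ln (IZR 2))^-1 * N%:R^-1 * X.
      by field; rewrite !lt0r_neq0.
    exact: h'.
  move=> hX; apply: le_trans hX _.
  have Nd : 0 <= N%:R * del by rewrite mulr_ge0 // ltW.
  have := ler_wpM2r Nd L21. rewrite mul1r -mulrA. done.
set del := (64 * (n%:R) ^+ 2)^-1 in stepA *.
have hsq : \sum_z a z ^+ 2 <= N%:R * del.
  apply: le_trans stepA; apply: ler_sum => z _; exact: (stepC z).2.
have cs := @CS _ a (fun _ => 1).
have e1 : \sum_(z : dom n) (1 : R) ^+ 2 = N%:R.
  by rewrite (eq_bigr (fun _ => 1)) ?sumr_const // => z _; rewrite expr1n.
rewrite e1 (eq_bigr a) in cs; last by move=> z _; rewrite mulr1.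
set X := \sum_z a z in cs *.
have X0 : 0 <= X by apply: sumr_ge0 => z _; exact: (stepC z).1.
have n0 : 0 < n%:R :> R by rewrite ltr0n.
have hX2 : X ^+ 2 <= (N%:R * (8 * n%:R)^-1) ^+ 2.
  apply: (le_trans cs).
  have -> : (N%:R * (8 * n%:R)^-1) ^+ 2 = N%:R * del * N%:R.
    rewrite /del; field. by rewrite lt0r_neq0.
  by apply: ler_wpM2r; [exact: ltW|].
have hX : X <= N%:R * (8 * n%:R)^-1.
  rewrite -(ler_pXn2r (n:=2)) // ?nnegrE //.
  by apply: mulr_ge0; [exact: ltW| rewrite invr_ge0 mulr_ge0 // ltW].
rewrite mulrC ler_pdivrMr //. by rewrite mulrC.
Qed.
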